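(* Let $l,m,k$ be non-negative integers with $2l\le m\le 2k$, and let $d$ be an integer with $0\le d\le k+l-m$. Then $$\sum_{i=0}^{k+l-m-d}P\big((0,0),(i,i+d)\big)\,P\big((i+l,i+d+m-l),(k,k)\big)=\binom{2k-m+1}{k-m+l-d}-\binom{2k-m+1}{k-m+l-d-1}.$$
   Context: A NE upper path is a lattice path in $\mathbb{Z}^2$ each of whose steps is either $(0,1)$ (North) or $(1,0)$ (East), and which never visits a point $(x,y)$ with $y<x$. For points $(x_1,y_1),(x_2,y_2)\in\mathbb{Z}^2$, $P((x_1,y_1),(x_2,y_2))$ denotes the number of NE upper paths from $(x_1,y_1)$ to $(x_2,y_2)$ (this is $0$ if no such path exists). Convention: $\binom{x}{y}=0$ for integers $x\ge 0$ and $y<0$. *)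

(* Defs.v *)
From mathcomp Require Import all_boot all_order all_algebra.
Set Implicit Arguments. Unset Strict Implicit. Unset Printing Implicit Defensive.
Import Order.TTheory GRing.Theory Num.Theory.
Local Open Scope ring_scope.

Definition point := (int * int)%type.

(* One step of a lattice path: true = North (0,1), false = East (1,0). *)
Definition step (p : point) (b : bool) : point :=
  if b then (p.1, p.2 + 1) else (p.1 + 1, p.2).

Definition visited (a : point) (w : seq bool) : seq point :=
  a :: scanl step a w.

Definition endpoint (a : point) (w : seq bool) : point := last a (scanl step a w).

Definition is_upper_path (a b : point) (w : seq bool) : bool :=
  all (fun p : point => p.1 <= p.2) (visited a w) && (endpoint a w == b).

(* Every such path has exactly
   (b.1 + b.2) - (a.1 + a.2) steps, so it suffices to count step words of
   that length (when that quantity is negative, no path can end at b,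
   and the count is 0 since endpoint checks fail). *)
Definition P (a b : point) : nat :=
  let n := absz ((b.1 + b.2) - (a.1 + a.2))%R in
  #|[set w : n.-tuple bool | is_upper_path a b w]|.

Definition binz (n : nat) (j : int) : int :=
  match j with
  | Posz j' => ('C(n, j'))%:Z
  | Negz _ => 0
  end.

(* Main.v *)
Require Import Defs.
From mathcomp Require Import all_boot all_order all_algebra.
From mathcomp Require Import zify.
Import Order.TTheory GRing.Theory Num.Theory.
Local Open Scope ring_scope.

Open Scope nat_scope.
Fixpoint W (n s t : nat) : nat :=
  match n with
  | 0 => (s == t : nat)
  | n'.+1 => (W n' s.+1 t + (if s is s'.+1 then W n' s' t else 0))%N
  end.

Lemma W_S n s t : W n.+1 s t = W n s.+1 t + (if s is s'.+1 then W n s' t else 0).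
Proof. by []. Qed.

Lemma W_last n s t : W n.+1 s t = (if t is t'.+1 then W n s t' else 0) + W n s t.+1.
Proof.
elim: n s t => [|n IH] s t.
  by case: s => [|s]; case: t => [|t] //=; rewrite ?eqSS ?addn0 ?addnC.
rewrite W_S (IH s.+1); case: s => [|s]; rewrite ?(IH s); case: t => [|t]; rewrite ?W_S /=; lia.
Qed.

Lemma W_sym n s t : W n s t = W n t s.
Proof.
elim: n s t => [|n IH] s t; first by rewrite /= eq_sym.
rewrite W_S W_last (IH s.+1 t); case: s => [|s] /=; rewrite ?(IH s t); lia.
Qed.

Lemma W_small n s t : n + s < t -> W n s t = 0.
Proof.
elim: n s => [|n IH] s h /=; first by case: eqP => // e; lia.
rewrite IH; last lia.
case: s h => [|s] h //; rewrite IH //; lia.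
Qed.

Lemma W_par n s t : odd (n + s + t) -> W n s t = 0.
Proof.
elim: n s => [|n IH] s h /=; first by case: eqP => // e; subst; rewrite addnn odd_double in h.
rewrite IH; last by rewrite addnS -addSn.
case: s h => [|s] h //; rewrite IH //; move: h; rewrite !addSn !addnS !addSn /= negbK //.
Qed.

Lemma W_dec N h e : W N.+1 0 (h + e).+1 = \sum_(0 <= j < N.+1) W j 0 h * W (N - j) 0 e.
Proof.
elim: N e => [|N IH] e.
  rewrite big_nat1 /=; case: h => [|h]; case: e => [|e] //=; by rewrite ?addn0 ?muln0.
rewrite W_last big_nat_recr // subnn.
case: e => [|e].
  rewrite addn0 (_ : h.+2 = (h + 1).+1); last by rewrite addn1.
  rewrite IH [in RHS](eq_big_nat _ _ (F2 := fun j => W j 0 h * W (N - j) 0 1)); last first.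
    by move=> j /andP[_ hj] /=; rewrite subSn // W_last.
  by rewrite [W 0 0 0]/= muln1 addnC.
rewrite (_ : W N.+1 0 (h + e.+1) = W N.+1 0 (h + e).+1); last by rewrite addnS.
rewrite (_ : W N.+1 0 (h + e.+1).+2 = W N.+1 0 (h + e.+2).+1); last by rewrite !addnS.
rewrite !IH -big_split /= muln0 addn0.
apply: eq_big_nat => j /andP[_ hj].
by rewrite subSn // W_last mulnDr.
Qed.

Lemma ballot n j t : j.*2 + t = n ->
  W n 0 t + (if j is j'.+1 then 'C(n, j') else 0) = 'C(n, j).
Proof.
elim: n j t => [|n IH] j t e.
  by case: j e => [|j] //=; case: t.
rewrite W_last.
case: j e => [|j] e.
  case: t e => [|t] e //; rewrite /= in e; rewrite addn0 bin0 (@W_small n 0 t.+2); last lia.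
  by have := IH 0 t; rewrite addn0 bin0 => ->; lia.
case: t e => [|t] e.
  have e' : n = j.*2.+1 by rewrite doubleS in e; lia.
  have := IH j 1 ltac:(lia).
  rewrite add0n binS.
  have -> : 'C(n, j.+1) = 'C(n, j) by rewrite e' -(bin_sub (n := j.*2.+1) (m := j)) //; [congr binomial; rewrite -addnn; lia | lia].
  case: j {e} e' => [|j] e' /=; rewrite ?bin0 ?binS; lia.
have h1 := IH j.+1 t ltac:(rewrite doubleS in e; lia).
have h2 := IH j t.+2 ltac:(rewrite doubleS in e; lia).
rewrite binS; case: j {e} h1 h2 => [|j] /= h1 h2; rewrite ?bin0 ?binS; lia.
Qed.

Open Scope ring_scope.

Lemma sum_tupleS n (f : n.+1.-tuple bool -> nat) :
  (\sum_(w : n.+1.-tuple bool) f w =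
   \sum_(w : n.-tuple bool) (f [tuple of true :: w] + f [tuple of false :: w]))%N.
Proof.
rewrite (reindex (fun p : bool * n.-tuple bool => [tuple of p.1 :: p.2])) /=.
  rewrite -(pair_big (fun _ : bool => true) (fun _ : n.-tuple bool => true) (fun (b : bool) (w : n.-tuple bool) => f [tuple of b :: w])) /=.
  by rewrite big_bool /= -big_split.
apply: onW_bij; apply: (@Bijective _ _ _ (fun w : n.+1.-tuple bool => (thead w, behead_tuple w))).
  by move=> [b t] /=; congr pair; apply: val_inj.
by move=> w /=; rewrite -tuple_eta.
Qed.

Lemma upper_cons a b x w :
  is_upper_path a b (x :: w) = (a.1 <= a.2) && is_upper_path (step a x) b w.
Proof. by rewrite /is_upper_path /endpoint /= !andbA. Qed.

Lemma upper_nil a b : is_upper_path a b [::] = (a.1 <= a.2) && (a == b).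
Proof. by rewrite /is_upper_path /= andbT. Qed.

Definition cnt n (a b : point) : nat :=
  \sum_(w : n.-tuple bool) (is_upper_path a b w : nat).

Lemma cntE n (a b : point) : cnt n a b =
  if [&& a.1 <= a.2, b.1 <= b.2 & b.1 + b.2 - (a.1 + a.2) == n%:Z]
  then W n (absz (a.2 - a.1)) (absz (b.2 - b.1)) else 0%N.
Proof.
elim: n a => [|n IH] [x y].
  rewrite /cnt (eq_bigr (fun _ => (is_upper_path (x, y) b [::] : nat))); last first.
    by move=> w _; rewrite tuple0.
  rewrite sum_nat_const card_tuple expn0 mul1n upper_nil /=.
  case: b => u v /=; rewrite xpair_eqE.
  case: (x <= y) / boolP => h1; case: (u <= v) / boolP => h2;
  case: (u + v - (x + y) == 0) / boolP => h3;
  case: (x == u) / boolP => h4; case: (y == v) / boolP => h5;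
  case: (`|(y - x)%R|%N == `|(v - u)%R|%N) / boolP => h6 //=; lia.
rewrite /cnt sum_tupleS /=.
case: (x <= y) / boolP => h1; last first.
  by rewrite big1 // => w _; rewrite !upper_cons /= (negbTE h1).
rewrite big_split /=.
rewrite (eq_bigr (fun w : n.-tuple bool => is_upper_path (x, y+1) b w : nat)); last first.
  by move=> w _; rewrite upper_cons h1.
rewrite [X in (_ + X)%N](eq_bigr (fun w : n.-tuple bool => is_upper_path (x+1, y) b w : nat)); last first.
  by move=> w _; rewrite upper_cons h1.
rewrite -/(cnt n (x, y+1) b) -/(cnt n (x+1, y) b) !IH /=.
clear IH; case: b => u v /=.
have -> : `|(y + 1 - x)%R|%N = (`|(y - x)%R|%N).+1 by lia.
case E: `|(y - x)%R|%N => [|h].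
  have -> : (x + 1 <= y) = false by lia.
  rewrite /= addn0.
  case: (x <= y + 1) / boolP => h2; case: (u <= v) / boolP => h3;
  case: (u + v - (x + (y + 1)) == n) / boolP => h4;
  case: (u + v - (x + y) == n.+1) / boolP => h5 //=; lia.
have -> : `|(y - (x + 1))%R|%N = h by lia.
have -> : (x + 1 <= y) = true by lia.
  case: (x <= y + 1) / boolP => h2; case: (u <= v) / boolP => h3;
  case: (u + v - (x + (y + 1)) == n) / boolP => h4;
  case: (u + v - (x + 1 + y) == n) / boolP => h6;
  case: (u + v - (x + y) == n.+1) / boolP => h5 //=; lia.
Qed.


Lemma card_cnt n (a b : point) :
  #|[set w : n.-tuple bool | is_upper_path a b w]| = cnt n a b.
Proof.
rewrite cardsE -sum1_card big_mkcond /cnt; apply: eq_bigr => w _ /=.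
by rewrite unfold_in /is_upper_path /=; case: (_ && _).
Qed.

Lemma P_W (x y u v : nat) : (x <= y)%N -> (u <= v)%N -> (x + y <= u + v)%N ->
  P (x%:Z, y%:Z) (u%:Z, v%:Z) = W (u + v - (x + y)) (y - x) (v - u).
Proof.
move=> h1 h2 h3; rewrite /P card_cnt cntE /= ifT; last first.
  apply/and3P; split; lia.
congr W; lia.
Qed.

Lemma reidx0 (g : nat -> nat) d M :
  (forall j, (j < d)%N -> g j = 0%N) -> (forall j, odd (j + d) -> g j = 0%N) ->
  (\sum_(0 <= j < (d + M.*2).+1) g j = \sum_(0 <= i < M.+1) g (i.*2 + d))%N.
Proof.
move=> H1 H2; elim: M => [|M IH].
  rewrite big_nat1 addn0 big_nat_recr //= big1_seq ?add0n // => j.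
  by rewrite mem_index_iota => /andP[_ hj]; apply: H1.
rewrite doubleS !addnS big_nat_recr // big_nat_recr // IH [in RHS]big_nat_recr //=.
rewrite [g (d + M.*2).+1]H2 ?addn0; last first.
  by rewrite addSn /= addnC addnA addnn oddD !odd_double.
by congr (_ + g _)%N; rewrite doubleS; lia.
Qed.

Lemma reidx (g : nat -> nat) d M N :
  (forall j, (j < d)%N -> g j = 0%N) -> (forall j, odd (j + d) -> g j = 0%N) ->
  (forall j, (d + M.*2 < j)%N -> (j <= N)%N -> g j = 0%N) -> (d + M.*2 <= N)%N ->
  (\sum_(0 <= j < N.+1) g j = \sum_(0 <= i < M.+1) g (i.*2 + d))%N.
Proof.
move=> H1 H2 H3 hN.
rewrite (@big_cat_nat _ _ _ (d + M.*2).+1) //= reidx0 //.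
rewrite [X in (_ + X)%N]big1_seq ?addn0 // => j; rewrite mem_index_iota => /andP[h1 h2].
by apply: H3; lia.
Qed.

Lemma binz_pred n j : binz n (j%:Z - 1) = (if j is j'.+1 then 'C(n, j') else 0%N)%:Z.
Proof.
case: j => [|j] //.
by have -> : j.+1%:Z - 1 = j%:Z by lia.
Qed.

Theorem mainTheorem5 (l m k d : nat) :
  (2 * l <= m)%N -> (m <= 2 * k)%N -> (d + m <= k + l)%N ->
  \sum_(0 <= i < (k + l - m - d).+1)
     ((P (0, 0) (i%:Z, (i + d)%:Z))%:Z *
      (P ((i + l)%:Z, (i + d + m)%:Z - l%:Z) (k%:Z, k%:Z))%:Z)
  = binz (2 * k - m + 1) ((k + l - m - d)%N%:Z)
    - binz (2 * k - m + 1) ((k + l - m - d)%N%:Z - 1).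
Proof.
move=> h1 h2 h3.
set M := (k + l - m - d)%N.
set N := (2 * k - m)%N.
set a := (m - 2 * l)%N.
pose g j := (W j 0 d * W (N - j) 0 (d + a))%N.
rewrite (eq_big_nat _ _ (F2 := fun i => (g (i.*2 + d))%:Z)); last first.
  move=> i /andP[_ hi].
  have -> : (i + d + m)%:Z - l%:Z = (i + d + m - l)%N%:Z by lia.
  rewrite (P_W 0 0 i (i + d)) ?(P_W (i + l) (i + d + m - l) k k); try lia.
  rewrite -PoszM /g; congr Posz; rewrite (W_sym _ (i + d + m - l - (i + l))).
  congr (W _ _ _ * W _ _ _); lia.
rewrite -(big_morph Posz PoszD (erefl (Posz 0))).
rewrite -(@reidx g d M N); first last.
- lia.
- move=> j hj hjN; rewrite /g (@W_small (N - j)) ?muln0 //; lia.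
- by move=> j hj; rewrite /g W_par ?addn0.
- by move=> j hj; rewrite /g W_small // addn0.
rewrite -W_dec binz_pred.
have hb := @ballot (N + 1) M (d + (d + a)).+1 ltac:(rewrite -addnn; lia).
rewrite /binz !addn1 in hb *.
by rewrite -hb PoszD addrK.
Qed.
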